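(* Let $s\ge0$ be an integer and let $G$ be a graph such that $G$ is not an $s$-star, but $G\setminus v$ is an $s$-star for every $v\in V(G)$. Then $|V(G)|\le 4s+5$.
   Context: Graphs are finite and simple. A set $X\subseteq V(G)$ is a crown of $G$ if every vertex $v\in V(G)$ is either adjacent to all vertices of $X\setminus\{v\}$ or adjacent to none of them (in particular $G[X]$ is complete or edgeless). A set $S\subseteq V(G)$ is a core of $G$ if $V(G)\setminus S$ is a crown. $G$ is an $s$-star if it has a core of size at most $s$. *)

(* Defs.v *)
From mathcomp Require Import all_boot.
Set Implicit Arguments. Unset Strict Implicit. Unset Printing Implicit Defensive.

(* A finite simple graph on vertex type T: symmetric irreflexive relation e.
   Subgraphs induced on a vertex set U : {set T} are handled by restricting
   all quantifications to U. *)
Definition simple_graph (T : finType) (e : rel T) : Prop :=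
  symmetric e /\ irreflexive e.

Definition is_crown (T : finType) (e : rel T) (U X : {set T}) : bool :=
  (X \subset U) &&
  [forall v in U, [forall x in X :\ v, e v x] || [forall x in X :\ v, ~~ e v x]].

Definition is_core (T : finType) (e : rel T) (U S : {set T}) : bool :=
  (S \subset U) && is_crown e U (U :\: S).

Definition is_star (T : finType) (e : rel T) (U : {set T}) (s : nat) : bool :=
  [exists S : {set T}, is_core e U S && (#|S| <= s)].

(* Main.v *)
Require Import Defs.
From mathcomp Require Import all_boot.
From mathcomp Require Import zify.

Section Proof.
Variables (T : finType) (e : rel T).

Definition Pv (v : T) (Z : {set T}) : bool :=
  [forall x in Z :\ v, e v x] || [forall x in Z :\ v, ~~ e v x].

Lemma Pv_sub v (Y Z : {set T}) : Y \subset Z -> Pv v Z -> Pv v Y.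
Proof.
move=> sYZ /orP [/forallP H | /forallP H]; apply/orP; [left|right];
  apply/forallP => x; apply/implyP => Hx; apply: (implyP (H x));
  move: Hx; rewrite !in_setD1 => /andP [-> /(subsetP sYZ) ->] //.
Qed.

Lemma crownP (U X : {set T}) v : is_crown e U X -> v \in U -> Pv v X.
Proof. by case/andP => _ /forallP H Hv; exact: (implyP (H v) Hv). Qed.

Arguments crownP {U X v}.
Arguments Pv_sub {v Y Z}.

Lemma crownI (w x : T) (A B : {set T}) : w != x -> is_crown e (setT :\ w) A ->
  is_crown e (setT :\ x) B -> is_crown e setT (A :&: B).
Proof.
move=> wx cA cB; apply/andP; split; first exact: subsetT.
apply/forallP => v; apply/implyP => _; change (Pv v (A :&: B)).
have [vw|vw] := eqVneq v w.
  apply: (Pv_sub (subsetIr A B)).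
  by apply: (crownP cB); rewrite !inE vw wx.
apply: (Pv_sub (subsetIl A B)).
by apply: (crownP cA); rewrite !inE vw.
Qed.

Lemma crownU (A B : {set T}) : is_crown e setT A -> is_crown e setT B ->
  1 < #|A :&: B| -> is_crown e setT (A :|: B).
Proof.
move=> cA cB hAB; apply/andP; split; first exact: subsetT.
apply/forallP => v; apply/implyP => _; change (Pv v (A :|: B)).
have PA := crownP cA (in_setT v); have PB := crownP cB (in_setT v).
have : 0 < #|(A :&: B) :\ v|.
  move: hAB; rewrite (cardsD1 v (A :&: B)); case: (v \in A :&: B) => /=; lia.
case/card_gt0P => z; rewrite !inE => /andP [zv /andP [zA zB]].
have zA' : z \in A :\ v by rewrite in_setD1 zv zA.
have zB' : z \in B :\ v by rewrite in_setD1 zv zB.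
case evz: (e v z).
- have HA : [forall x in A :\ v, e v x].
    case/orP: PA => // /forallP /(_ z); by rewrite zA' evz.
  have HB : [forall x in B :\ v, e v x].
    case/orP: PB => // /forallP /(_ z); by rewrite zB' evz.
  apply/orP; left; apply/forallP => x; apply/implyP.
  rewrite !inE => /andP [xv /orP [xA|xB]].
  + by apply: (implyP ((forallP HA) x)); rewrite in_setD1 xv xA.
  + by apply: (implyP ((forallP HB) x)); rewrite in_setD1 xv xB.
- have HA : [forall x in A :\ v, ~~ e v x].
    case/orP: PA => // /forallP /(_ z); by rewrite zA' evz.
  have HB : [forall x in B :\ v, ~~ e v x].
    case/orP: PB => // /forallP /(_ z); by rewrite zB' evz.
  apply/orP; right; apply/forallP => x; apply/implyP.
  rewrite !inE => /andP [xv /orP [xA|xB]].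
  + by apply: (implyP ((forallP HA) x)); rewrite in_setD1 xv xA.
  + by apply: (implyP ((forallP HB) x)); rewrite in_setD1 xv xB.
Qed.

Lemma crown0 : is_crown e setT set0.
Proof.
apply/andP; split; first exact: sub0set.
apply/forallP => v; apply/implyP => _; apply/orP; left.
by apply/forallP => x; rewrite !inE andbF.
Qed.

End Proof.

Theorem lemma4p1 (T : finType) (e : rel T) (s : nat) :
  simple_graph e ->
  ~~ is_star e [set: T] s ->
  (forall v : T, is_star e ([set: T] :\ v) s) ->
  #|T| <= 4 * s + 5.
Proof.
move=> _ nstar hstar.
rewrite leqNgt; apply/negP => hn.
pose S v := odflt set0 [pick S | is_core e (setT :\ v) S && (#|S| <= s)].
have hS : forall v, is_core e (setT :\ v) (S v) && (#|S v| <= s).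
  move=> v; rewrite /S; case: pickP => //= H.
  by move: (hstar v) => /existsP [S0 HS0]; move: (H S0); rewrite HS0.
pose X v := (setT :\ v) :\: S v.
have cX : forall v, is_crown e (setT :\ v) (X v).
  by move=> v; case/andP: (hS v) => /andP [].
have cS : forall v, #|S v| <= s by move=> v; case/andP: (hS v).
have inX : forall v a, (a \in X v) = (a != v) && (a \notin S v).
  by move=> v a; rewrite /X !inE andbT andbC.
have bigY : forall x y, x != y ->
    is_crown e setT (X x :&: X y) /\ #|T| <= #|X x :&: X y| + 2 * s + 2.
  move=> x y xy; split; first exact: crownI xy (cX x) (cX y).
  have sub : ~: (X x :&: X y) \subset x |: (y |: (S x :|: S y)).
    apply/subsetP => a; rewrite in_setC in_setI !inX !inE.
    by case: (a == x); case: (a == y); case: (a \in S x); case: (a \in S y).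
  have := subset_leq_card sub; rewrite !cardsU1.
  have := cardsUI (S x) (S y); have := cS x; have := cS y.
  have := cardsC (X x :&: X y).
  case: (x \notin _); case: (y \notin _) => /=; lia.
have [M crM maxM] : exists2 M, is_crown e setT M &
    forall N, is_crown e setT N -> #|N| <= #|M|.
  case: (@arg_maxnP _ set0 (fun N => is_crown e setT N) (fun N => #|N|) (@crown0 T e)).
  by move=> M H1 H2; exists M.
have n2 : 1 < #|T| by lia.
have [x0 [y0 xy0]] : exists x y : T, x != y.
  case/card_gt1P: n2 => x [y [_ _ xy]]; by exists x, y.
have Mbig : #|T| <= #|M| + 2 * s + 2.
  case: (bigY x0 y0 xy0) => c b; have := maxM _ c; lia.
have Msmall : s < #|~: M|.
  rewrite ltnNge; apply/negP => h; move/negP: nstar; apply; apply/existsP.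
  exists (~: M); rewrite h andbT; apply/andP; split; first exact: subsetT.
  by rewrite setTD setCK.
have exA : forall x, x \in M -> exists a, (a \in X x) && (a \notin M).
  move=> x xM.
  have : ~~ (~: M \subset S x).
    apply/negP => /subset_leq_card; have := cS x; lia.
  case/subsetPn => a; rewrite inE => aM aS; exists a.
  rewrite inX aS aM !andbT; apply/eqP => ax; by rewrite ax xM in aM.
have disj : forall x y a, x != y -> a \in X x -> a \in X y -> a \in M.
  move=> x y a xy ax ay.
  case: (bigY x y xy) => cY bY.
  have hI : 1 < #|(X x :&: X y) :&: M|.
    have := cardsUI (X x :&: X y) M; have := max_card ((X x :&: X y) :|: M); lia.
  have cU := @crownU T e _ _ cY crM hI.
  have := maxM _ cU => le.
  have eqU : M == (X x :&: X y) :|: M by rewrite eqEcard subsetUr le.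
  by rewrite (eqP eqU) in_setU in_setI ax ay.
pose f x := odflt x [pick a | (a \in X x) && (a \notin M)].
have fP : forall x, x \in M -> (f x \in X x) && (f x \notin M).
  move=> x xM; rewrite /f; case: pickP => //= H.
  by case: (exA x xM) => a; rewrite H.
have inj : {in M &, injective f}.
  move=> x y xM yM fxy; apply/eqP; apply/negP => /negP xy.
  case/andP: (fP x xM) => h1 h2; case/andP: (fP y yM) => h3 h4.
  by rewrite fxy in h1 h2; rewrite (disj x y (f y) xy h1 h3) in h2.
have : [set f x | x in M] \subset ~: M.
  apply/subsetP => a /imsetP [x xM ->]; rewrite inE; by case/andP: (fP x xM).
move/subset_leq_card; rewrite card_in_imset //.
have := cardsC M; lia.
Qed.
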